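(* Let $A\in\mathbb{R}^{n\times n}$ be entrywise nonnegative with all diagonal entries positive (no invertibility assumed). Then $A$ is a Karamardian matrix.
   Context: For $M\in\mathbb{R}^{n\times n}$ let $K_M=\mathbb{R}^n_+\cap R(M)$ and $K_M^*=\{y: x^Ty\ge 0\ \forall x\in K_M\}$ (one has $K_M^*=\mathbb{R}^n_++N(M^T)$, with interior $\{a+b: a>0,\ b\in N(M^T)\}$). For $q$, LCP$(M,K_M,q)$ is to find $x\in K_M$ with $Mx+q\in K_M^*$ and $x^T(Mx+q)=0$. $M$ is a Karamardian matrix if $K_M\ne\{0\}$ and there exists $d$ in the interior of $K_M^*$ such that both LCP$(M,K_M,0)$ and LCP$(M,K_M,d)$ have $x=0$ as their only solution. *)

(* Defs.v *)
From HB Require Import structures.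
From mathcomp Require Import all_boot all_order all_algebra.
From mathcomp Require Import reals.
Set Implicit Arguments. Unset Strict Implicit. Unset Printing Implicit Defensive.
Import Order.TTheory GRing.Theory Num.Theory.
Local Open Scope ring_scope.

Section Karamardian.
Variables (R : realType) (n : nat).
Implicit Types (M : 'M[R]_n) (x y q d : 'cV[R]_n).

Definition nonneg x : Prop := forall i, 0 <= x i 0.

Definition in_range M x : Prop := exists y, x = M *m y.

Definition in_KM M x : Prop := nonneg x /\ in_range M x.

Definition in_KM_dual M y : Prop :=
  forall x, in_KM M x -> 0 <= (x^T *m y) 0 0.

Definition in_int_KM_dual M d : Prop :=
  exists2 e : R, 0 < e &
    forall z : 'cV[R]_n, (forall i, `|z i 0 - d i 0| < e) -> in_KM_dual M z.

Definition LCP_sol M q x : Prop :=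
  [/\ in_KM M x, in_KM_dual M (M *m x + q) & (x^T *m (M *m x + q)) 0 0 = 0].

Definition Karamardian M : Prop :=
  (exists2 x, in_KM M x & x != 0) /\
  exists d, [/\ in_int_KM_dual M d,
               (forall x, LCP_sol M 0 x -> x = 0) &
               (forall x, LCP_sol M d x -> x = 0)].

End Karamardian.

(* Main.v *)
Require Import Defs.
From HB Require Import structures.
From mathcomp Require Import all_boot all_order all_algebra.
From mathcomp Require Import reals.
From mathcomp Require Import lra.
Import Order.TTheory GRing.Theory Num.Theory.
Local Open Scope ring_scope.

Lemma dotE (R : realType) (n : nat) (x y : 'cV[R]_n) :
  (x^T *m y) 0 0 = \sum_i x i 0 * y i 0.
Proof. by rewrite !mxE; apply: eq_bigr => i _; rewrite mxE. Qed.

Lemma Ax_ge {R : realType} {n : nat} {A : 'M[R]_n} {x : 'cV[R]_n} i :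
  (forall i j, 0 <= A i j) -> nonneg x -> A i i * x i 0 <= (A *m x) i 0.
Proof.
move=> HA Hx; rewrite mxE (bigD1 i) //= lerDl.
by apply: sumr_ge0 => j _; apply: mulr_ge0.
Qed.

Theorem mainTheorem16 (R : realType) (n : nat) (A : 'M[R]_n) :
  (0 < n)%N ->
  (forall i j, 0 <= A i j) ->
  (forall i, 0 < A i i) ->
  Karamardian A.
Proof.
move=> Hn HA Hd; split.
  pose i0 : 'I_n := Ordinal Hn.
  exists (col i0 A); first split.
  - by move=> i; rewrite mxE.
  - by exists (delta_mx i0 0); rewrite colE.
  apply/eqP => /matrixP /(_ i0 0); rewrite !mxE => H.
  by move: (Hd i0); rewrite H ltxx.
exists (const_mx 1); split.
- exists 1 => // z Hz x [Hx _]; rewrite dotE; apply: sumr_ge0 => i _.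
  apply: mulr_ge0 => //; move: (Hz i); rewrite mxE ltr_norml => /andP[H _].
  apply: ltW; by rewrite -(ltrD2r 1) subrK addNr in H.
- move=> x [[Hx _] _]; rewrite addr0 dotE => H0.
  apply/matrixP => i j; rewrite (ord1 j) mxE.
  have : x i 0 * (A *m x) i 0 = 0.
    apply: (psumr_eq0P _ H0) => // k _.
    have h1 := Ax_ge k HA Hx; have h2 := Hx k; have h3 := Hd k.
    apply: mulr_ge0 => //; apply: le_trans h1; apply: mulr_ge0 => //; apply: ltW.
  move/eqP; rewrite mulf_eq0 => /orP[/eqP//|/eqP E].
  have := Ax_ge i HA Hx; rewrite E => H1.
  have H2 := Hx i; have H3 := Hd i.
  apply/eqP; rewrite eq_le H2 andbT.
  by rewrite -(pmulr_rle0 _ H3).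
- move=> x [[Hx _] _]; rewrite dotE => H0.
  apply/matrixP => i j; rewrite (ord1 j) mxE.
  have Hp k : 0 < (A *m x + const_mx 1) k 0.
    rewrite !mxE; apply: (@le_lt_trans _ _ (\sum_j0 A k j0 * x j0 0)).
      by apply: sumr_ge0 => j0 _; apply: mulr_ge0.
    by rewrite ltrDl.
  have : x i 0 * (A *m x + const_mx 1) i 0 = 0.
    by apply: (psumr_eq0P _ H0) => // k _; apply: mulr_ge0 => //; apply: ltW.
  move/eqP; rewrite mulf_eq0 => /orP[/eqP//|/eqP E].
  by move: (Hp i); rewrite E ltxx.
Qed.
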